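(* Let $\tilde\varepsilon_0:\mathbb R\to\mathbb R$ be any function supported in $[\frac43\delta^{\frac1{2i_1}},\frac53\delta^{\frac1{2i_1}}]$, and let $u_0(x)=\sum_{l=1}^L\delta^{\frac1{2i_l}}\Psi_{i_l}\big((x-y_{l,0})\delta^{-\alpha_l}\big)+\tilde\varepsilon_0(x)$. Then $h_l=u_0(y_{l,0})-u_0(0)$ for every $l$, and: $h_l<0$ for $2\le l\le L$; $h_{l+1}<h_l$ for $2\le l\le L-1$; and there is a constant $C$ independent of $\delta$ such that for all sufficiently small $\delta>0$ and all $2\le l\le L$, $$|h_l|\le C\,\delta^{\frac{1}{2i_m(2i_m+1)}}.$$
   Context: For a positive integer $i$, $\Psi_i:\mathbb R\to\mathbb R$ denotes the odd, strictly decreasing, analytic solution of $-\frac{1}{2i}\Psi_i+\frac{2i+1}{2i}X\Psi_i'(X)+\Psi_i(X)\Psi_i'(X)=0$ satisfying $\Psi_i(X)=-X+X^{2i+1}+O(X^{4i+1})$ as $X\to0$. It satisfies $\Psi_i(X)=-\operatorname{sgn}(X)|X|^{\frac1{2i+1}}+\operatorname{sgn}(X)\frac{|X|^{-1+\frac{2}{2i+1}}}{2i+1}+O(|X|^{-2+\frac{3}{2i+1}})$ as $|X|\to\infty$, and $|\Psi_i(X)|\approx |X|(1+|X|)^{\frac1{2i+1}-1}$ for all $X$. Fix an integer $L\ge2$ and positive integers $i_1,\dots,i_L$; let $i_m=\max_l i_l$ and $\alpha_l=1+\frac1{2i_l}$. Let $\delta\in(0,1)$. For $l=1,\dots,L$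 put $y_{l,0}=3(l-1)\delta^{1/(2i_1)}$ and $h_l=\sum_{l'=1}^L\delta^{\frac1{2i_{l'}}}\Big(\Psi_{i_{l'}}\big(\tfrac{y_{l,0}-y_{l',0}}{\delta^{\alpha_{l'}}}\big)-\Psi_{i_{l'}}\big(\tfrac{-y_{l',0}}{\delta^{\alpha_{l'}}}\big)\Big)$. Here $A\approx B$ means $C^{-1}B\le A\le CB$ with $C$ independent of $X$. *)

(* Defs.v *)
From Stdlib Require Import Reals Lra Lia List.
Open Scope R_scope.

Definition sgn (x : R) : R := if Rlt_dec 0 x then 1 else if Rlt_dec x 0 then -1 else 0.

Definition sumL (L : nat) (f : nat -> R) : R :=
  fold_right Rplus 0 (map f (seq 1 L)).

Definition imax (L : nat) (i : nat -> nat) : nat :=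
  fold_right Nat.max 0%nat (map i (seq 1 L)).

Definition alpha (k : nat) : R := 1 + / (2 * INR k).

(* Properties defining Psi_k (odd, strictly decreasing, real-analytic solution of
   -1/(2k) Psi + (2k+1)/(2k) X Psi' + Psi Psi' = 0 with Psi(X) = -X + X^(2k+1) + O(X^(4k+1))),
   together with the two facts the paper states about it. *)
Definition IsPsi (k : nat) (P : R -> R) : Prop :=
  (forall X, exists d, derivable_pt_lim P X d /\
      - (/ (2 * INR k)) * P X + ((2 * INR k + 1) / (2 * INR k)) * X * d + P X * d = 0) /\
  (forall X, P (- X) = - P X) /\
  (forall X Y, X < Y -> P Y < P X) /\
  (forall x0, exists r, 0 < r /\ exists a : nat -> R,
      forall x, Rabs (x - x0) < r -> infinite_sum (fun n => a n * (x - x0) ^ n) (P x)) /\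
  (exists C r, 0 < r /\ forall X, Rabs X < r ->
      Rabs (P X - (- X + X ^ (2 * k + 1))) <= C * Rabs X ^ (4 * k + 1)) /\
  (exists C M, 0 < M /\ forall X, M <= Rabs X ->
      Rabs (P X - (- sgn X * Rpower (Rabs X) (/ (2 * INR k + 1))
                  + sgn X * Rpower (Rabs X) (-1 + 2 / (2 * INR k + 1)) / (2 * INR k + 1)))
      <= C * Rpower (Rabs X) (-2 + 3 / (2 * INR k + 1))) /\
  (exists C, 0 < C /\ forall X,
      / C * (Rabs X * Rpower (1 + Rabs X) (/ (2 * INR k + 1) - 1)) <= Rabs (P X) /\
      Rabs (P X) <= C * (Rabs X * Rpower (1 + Rabs X) (/ (2 * INR k + 1) - 1))).

Definition y0 (i : nat -> nat) (delta : R) (l : nat) : R :=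
  3 * INR (l - 1) * Rpower delta (/ (2 * INR (i 1%nat))).

Definition h (L : nat) (i : nat -> nat) (Psi : nat -> R -> R) (delta : R) (l : nat) : R :=
  sumL L (fun l' =>
    Rpower delta (/ (2 * INR (i l'))) *
      (Psi (i l') ((y0 i delta l - y0 i delta l') / Rpower delta (alpha (i l')))
       - Psi (i l') (- y0 i delta l' / Rpower delta (alpha (i l'))))).

Definition u0 (L : nat) (i : nat -> nat) (Psi : nat -> R -> R) (delta : R)
  (eps : R -> R) (x : R) : R :=
  sumL L (fun l => Rpower delta (/ (2 * INR (i l))) *
     Psi (i l) ((x - y0 i delta l) * Rpower delta (- alpha (i l)))) + eps x.

(* Main.v *)
Require Import Defs.
From Stdlib Require Import Reals Lra Lia List.
Open Scope R_scope.

Lemma Rpower_pos x y : 0 < Rpower x y.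
Proof. unfold Rpower; apply exp_pos. Qed.

Lemma Rpower_le_base_neg a b q : 0 < a -> a <= b -> q <= 0 -> Rpower b q <= Rpower a q.
Proof.
  intros Ha Hab Hq. unfold Rpower.
  destruct (Rle_lt_or_eq_dec _ _ Hab) as [H|H]; [|subst; lra].
  assert (ln a < ln b) by (apply ln_increasing; lra).
  assert (q * ln b <= q * ln a) by nra.
  destruct (Rle_lt_or_eq_dec _ _ H1) as [H2|H2]; [left; apply exp_increasing; lra| rewrite H2; lra].
Qed.

Lemma Rpower_le_exp_small d a b : 0 < d < 1 -> b <= a -> Rpower d a <= Rpower d b.
Proof.
  intros Hd Hab. unfold Rpower.
  assert (ln d < 0) by (rewrite <- ln_1; apply ln_increasing; lra).
  assert (a * ln d <= b * ln d) by nra.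
  destruct (Rle_lt_or_eq_dec _ _ H0) as [H2|H2]; [left; apply exp_increasing; lra| rewrite H2; lra].
Qed.

Lemma Psi_abs_mono k P : IsPsi k P -> forall X M, Rabs X <= M -> Rabs (P X) <= Rabs (P M).
Proof.
  intros (_ & Hodd & Hdec & _) X M HXM.
  assert (P0 : P 0 = 0) by (pose proof (Hodd 0); rewrite Ropp_0 in H; lra).
  assert (Hle : forall a b, a <= b -> P b <= P a).
  { intros a b Hab; destruct (Rle_lt_or_eq_dec _ _ Hab) as [H|H];
      [left; apply Hdec; lra | subst; lra]. }
  assert (HM: 0 <= M) by (pose proof (Rabs_pos X); lra).
  assert (P M <= 0) by (rewrite <- P0; apply Hle; lra).
  rewrite (Rabs_left1 (P M)) by lra.
  destruct (Rle_or_lt 0 X) as [HX|HX].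
  - rewrite Rabs_right in HXM by lra.
    assert (P X <= 0) by (rewrite <- P0; apply Hle; lra).
    assert (P M <= P X) by (apply Hle; lra).
    rewrite Rabs_left1; lra.
  - rewrite Rabs_left in HXM by lra.
    rewrite <- (Ropp_involutive X), Hodd.
    assert (P (-X) <= 0) by (rewrite <- P0; apply Hle; lra).
    assert (P M <= P (-X)) by (apply Hle; lra).
    rewrite Rabs_Ropp, Rabs_left1; lra.
Qed.

Lemma Psi_bound k P : IsPsi k P -> exists C, 0 < C /\ forall X M, 0 < M -> Rabs X <= M ->
   Rabs (P X) <= C * Rpower M (/ (2 * INR k + 1)).
Proof.
  intros HP. pose proof HP as (_ & _ & _ & _ & _ & _ & C & HC & HB).
  exists C; split; auto. intros X M HM HXM.
  eapply Rle_trans; [apply (Psi_abs_mono k P HP X M HXM)|].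
  destruct (HB M) as [_ H2]. eapply Rle_trans; [apply H2|].
  apply Rmult_le_compat_l; [lra|].
  rewrite Rabs_right by lra.
  assert (Hk: 0 <= INR k) by apply pos_INR.
  assert (Hp: / (2 * INR k + 1) <= 1).
  { rewrite <- Rinv_1. apply Rinv_le_contravar; lra. }
  assert (Rpower (1 + M) (/ (2 * INR k + 1) - 1) <= Rpower M (/ (2 * INR k + 1) - 1)).
  { apply Rpower_le_base_neg; lra. }
  replace (Rpower M (/ (2 * INR k + 1))) with (M * Rpower M (/ (2 * INR k + 1) - 1)).
  - apply Rmult_le_compat_l; lra.
  - rewrite <- (Rpower_1 M) at 1 by lra. rewrite <- Rpower_plus. f_equal; ring.
Qed.

Lemma delta_bound k P : (1 <= k)%nat -> IsPsi k P -> forall A, 0 < A ->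
  exists C, forall d j m, 0 < d < 1 -> (1 <= j <= m)%nat -> (k <= m)%nat ->
  forall X, Rabs X <= A * Rpower d (/ (2 * INR j)) / Rpower d (alpha k) ->
  Rpower d (/ (2 * INR k)) * Rabs (P X) <= C * Rpower d (/ (2 * INR m * (2 * INR m + 1))).
Proof.
  intros Hk HP A HA. destruct (Psi_bound k P HP) as (C0 & HC0 & HB).
  set (p := / (2 * INR k + 1)).
  exists (C0 * Rpower A p). intros d j m Hd Hjm Hkm X HX.
  assert (HK : 1 <= INR k) by (apply (le_INR 1); lia).
  assert (HJ : 1 <= INR j) by (apply (le_INR 1); lia).
  assert (HKM : INR k <= INR m) by (apply le_INR; lia).
  assert (HJM : INR j <= INR m) by (apply le_INR; lia).
  set (M := A * Rpower d (/ (2 * INR j)) / Rpower d (alpha k)).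
  assert (HMpos : 0 < M).
  { unfold M. pose proof (Rpower_pos d (/ (2 * INR j))); pose proof (Rpower_pos d (alpha k)).
    apply Rdiv_lt_0_compat; [apply Rmult_lt_0_compat|]; lra. }
  pose proof (HB X M HMpos HX) as H1.
  assert (HMe : M = A * Rpower d (/ (2 * INR j) - alpha k)).
  { unfold M, Rminus. rewrite Rpower_plus, Rpower_Ropp. unfold Rdiv. ring. }
  assert (HMp : Rpower M p = Rpower A p * Rpower d ((/ (2 * INR j) - alpha k) * p)).
  { rewrite HMe, <- Rpower_mult_distr, Rpower_mult; auto. apply Rpower_pos. }
  assert (Hexp : / (2 * INR k) + (/ (2 * INR j) - alpha k) * p = / (2 * INR j * (2 * INR k + 1))).
  { unfold p, alpha. field. lra. }
  assert (Hcmp : / (2 * INR m * (2 * INR m + 1)) <= / (2 * INR j * (2 * INR k + 1))).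
  { apply Rinv_le_contravar; [apply Rmult_lt_0_compat; lra|].
    assert (INR j * (2 * INR k + 1) <= INR m * (2 * INR m + 1)) by (apply Rmult_le_compat; lra). lra. }
  pose proof (Rpower_pos d (/ (2 * INR k))) as Hdk.
  apply Rle_trans with (Rpower d (/ (2 * INR k)) * (C0 * Rpower M p)).
  { apply Rmult_le_compat_l; [lra| exact H1]. }
  rewrite HMp.
  replace (Rpower d (/ (2 * INR k)) * (C0 * (Rpower A p * Rpower d ((/ (2 * INR j) - alpha k) * p))))
    with (C0 * Rpower A p * Rpower d (/ (2 * INR k) + (/ (2 * INR j) - alpha k) * p))
    by (rewrite Rpower_plus; ring).
  rewrite Hexp. apply Rmult_le_compat_l.
  - pose proof (Rpower_pos A p); nra.
  - apply Rpower_le_exp_small; auto.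
Qed.

Lemma sum_diff (f g : nat -> R) s :
  fold_right Rplus 0 (map f s) - fold_right Rplus 0 (map g s) =
  fold_right Rplus 0 (map (fun x => f x - g x) s).
Proof. induction s; simpl; [ring|rewrite <- IHs; ring]. Qed.

Lemma sum_lt (f g : nat -> R) s : s <> nil -> (forall x, In x s -> f x < g x) ->
  fold_right Rplus 0 (map f s) < fold_right Rplus 0 (map g s).
Proof.
  induction s as [|a s IH]; intros Hn H; [congruence|]. simpl.
  destruct s as [|b s'].
  - simpl. pose proof (H a (or_introl eq_refl)). lra.
  - assert (f a < g a) by (apply H; left; auto).
    assert (fold_right Rplus 0 (map f (b :: s')) < fold_right Rplus 0 (map g (b :: s'))).
    { apply IH; [congruence|]. intros x Hx; apply H; right; auto. }
    lra.
Qed.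

Lemma sum_zero s : fold_right Rplus 0 (map (fun _ : nat => 0) s) = 0.
Proof. induction s; simpl; [auto|rewrite IHs; ring]. Qed.

Lemma sum_bound (f : nat -> nat -> R -> R) (B : R -> R) (Q : R -> nat -> Prop) s :
  (forall l', In l' s -> exists C, forall d l, Q d l -> Rabs (f l' l d) <= C * B d) ->
  exists C, forall d l, Q d l -> Rabs (fold_right Rplus 0 (map (fun l' => f l' l d) s)) <= C * B d.
Proof.
  induction s as [|a s IH]; intros H.
  - exists 0. intros; simpl. rewrite Rabs_R0; lra.
  - destruct (H a (or_introl eq_refl)) as [C1 H1].
    destruct IH as [C2 H2]. { intros; apply H; right; auto. }
    exists (C1 + C2). intros d l Hq. simpl.
    eapply Rle_trans; [apply Rabs_triang|].
    pose proof (H1 d l Hq); pose proof (H2 d l Hq). lra.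
Qed.

Lemma imax_ge (i : nat -> nat) s l : In l s -> (i l <= fold_right Nat.max 0 (map i s))%nat.
Proof.
  induction s; simpl; [tauto|]. intros [->|H]; [lia|]. specialize (IHs H); lia.
Qed.

Theorem lemma2p1 (L : nat) (i : nat -> nat) (Psi : nat -> R -> R) :
  (2 <= L)%nat ->
  (forall l, (1 <= l <= L)%nat -> (1 <= i l)%nat) ->
  (forall k, (1 <= k)%nat -> IsPsi k (Psi k)) ->
  (forall delta, 0 < delta < 1 ->
     (forall eps : R -> R,
        (forall x, ~ (4 / 3 * Rpower delta (/ (2 * INR (i 1%nat))) <= x
                      <= 5 / 3 * Rpower delta (/ (2 * INR (i 1%nat)))) -> eps x = 0) ->
        forall l, (1 <= l <= L)%nat ->
          h L i Psi delta l = u0 L i Psi delta eps (y0 i delta l) - u0 L i Psi delta eps 0) /\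
     (forall l, (2 <= l <= L)%nat -> h L i Psi delta l < 0) /\
     (forall l, (2 <= l <= L - 1)%nat -> h L i Psi delta (S l) < h L i Psi delta l)) /\
  (exists C delta0, 0 < delta0 /\
     forall delta, 0 < delta < delta0 ->
       forall l, (2 <= l <= L)%nat ->
         Rabs (h L i Psi delta l)
         <= C * Rpower delta (/ (2 * INR (imax L i) * (2 * INR (imax L i) + 1)))).
Proof.
  intros HL Hi HPsi.
  assert (Hin : forall l', In l' (seq 1 L) -> (1 <= l' <= L)%nat).
  { intros l' H. apply in_seq in H. lia. }
  assert (Hdec : forall k, (1 <= k)%nat -> forall a b, a < b -> Psi k b < Psi k a).
  { intros k Hk. destruct (HPsi k Hk) as (_ & _ & H & _). exact H. }
  split.
  - intros d Hd.
    set (c := Rpower d (/ (2 * INR (i 1%nat)))).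
    assert (Hc : 0 < c) by apply Rpower_pos.
    assert (HD : forall k, 0 < Rpower d k) by apply Rpower_pos.
    split; [|split].
    + intros eps Heps l Hl.
      unfold u0.
      rewrite (Heps 0) by (intros [Ha Hb]; fold c in Ha; lra).
      rewrite (Heps (y0 i d l)).
      2:{ unfold y0; fold c. destruct (l - 1)%nat as [|n].
          - simpl. intros [Ha Hb]. fold c in Ha. lra.
          - rewrite S_INR. pose proof (pos_INR n). intros [Ha Hb]. fold c in Hb. nra. }
      rewrite !Rplus_0_r. unfold sumL. rewrite sum_diff. unfold h, sumL.
      f_equal. apply map_ext_in. intros l' _.
      rewrite Rpower_Ropp. unfold Rdiv.
      replace ((0 - y0 i d l') * / Rpower d (alpha (i l'))) with
        (- y0 i d l' * / Rpower d (alpha (i l'))) by ring. ring.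
    + intros l Hl. unfold h, sumL.
      eapply Rlt_le_trans; [apply (sum_lt _ (fun _ => 0))|rewrite sum_zero; lra].
      { destruct L; [lia|]. simpl; congruence. }
      intros l' Hl'. pose proof (Hin l' Hl'). pose proof (HD (/ (2 * INR (i l')))).
      assert (Psi (i l') ((y0 i d l - y0 i d l') / Rpower d (alpha (i l')))
              < Psi (i l') (- y0 i d l' / Rpower d (alpha (i l')))).
      { apply Hdec; [apply Hi; lia|]. unfold Rdiv. apply Rmult_lt_compat_r.
        { apply Rinv_0_lt_compat, HD. }
        unfold y0; fold c. assert (1 <= INR (l - 1)) by (apply (le_INR 1); lia). nra. }
      nra.
    + intros l Hl. unfold h, sumL. apply sum_lt.
      { destruct L; [lia|]. simpl; congruence. }
      intros l' Hl'. pose proof (Hin l' Hl'). pose proof (HD (/ (2 * INR (i l')))).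
      assert (Psi (i l') ((y0 i d (S l) - y0 i d l') / Rpower d (alpha (i l')))
              < Psi (i l') ((y0 i d l - y0 i d l') / Rpower d (alpha (i l')))).
      { apply Hdec; [apply Hi; lia|]. unfold Rdiv. apply Rmult_lt_compat_r.
        { apply Rinv_0_lt_compat, HD. }
        unfold y0; fold c. replace (S l - 1)%nat with (S (l - 1)) by lia.
        rewrite S_INR. nra. }
      nra.
  - set (m := imax L i).
    assert (Hm : forall l, (1 <= l <= L)%nat -> (i l <= m)%nat).
    { intros l Hl. apply imax_ge. apply in_seq. lia. }
    assert (Hi1 : (1 <= i 1%nat <= m)%nat) by (split; [apply Hi|apply Hm]; lia).
    assert (HA : 0 < 3 * INR L) by (assert (2 <= INR L) by (apply (le_INR 2); lia); lra).
    destruct (sum_bound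
      (fun l' l d => Rpower d (/ (2 * INR (i l'))) *
        (Psi (i l') ((y0 i d l - y0 i d l') / Rpower d (alpha (i l')))
         - Psi (i l') (- y0 i d l' / Rpower d (alpha (i l')))))
      (fun d => Rpower d (/ (2 * INR m * (2 * INR m + 1))))
      (fun d l => 0 < d < 1 /\ (2 <= l <= L)%nat) (seq 1 L)) as [C HC].
    + intros l' Hl'. pose proof (Hin l' Hl') as Hl'L.
      assert (Hk : (1 <= i l')%nat) by (apply Hi; lia).
      destruct (delta_bound (i l') (Psi (i l')) Hk (HPsi _ Hk) (3 * INR L) HA) as [C1 H1].
      exists (2 * C1). intros d l [Hd Hl].
      set (c := Rpower d (/ (2 * INR (i 1%nat)))).
      assert (Hc : 0 < c) by apply Rpower_pos.
      set (D := Rpower d (alpha (i l'))).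
      assert (HD : 0 < D) by apply Rpower_pos.
      assert (HdivD : forall x, Rabs x <= 3 * INR L * c -> Rabs (x / D) <= 3 * INR L * c / D).
      { intros x Hx. unfold Rdiv. rewrite Rabs_mult, Rabs_inv, (Rabs_right D) by lra.
        apply Rmult_le_compat_r; [left; apply Rinv_0_lt_compat; lra| exact Hx]. }
      assert (Hy : forall n, (1 <= n <= L)%nat -> 0 <= y0 i d n <= 3 * INR L * c).
      { intros n Hn. unfold y0; fold c. pose proof (pos_INR (n - 1)).
        assert (INR (n - 1) <= INR L) by (apply le_INR; lia). nra. }
      assert (HL1 : (1 <= l <= L)%nat) by lia.
      pose proof (Hy l HL1). pose proof (Hy l' Hl'L).
      assert (Ha : Rabs ((y0 i d l - y0 i d l') / D) <= 3 * INR L * c / D).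
      { apply HdivD. apply Rabs_le. lra. }
      assert (Hb : Rabs (- y0 i d l' / D) <= 3 * INR L * c / D).
      { apply HdivD. rewrite Rabs_Ropp, Rabs_right; lra. }
      pose proof (H1 d (i 1%nat) m Hd Hi1 (Hm l' Hl'L) _ Ha) as Ba.
      pose proof (H1 d (i 1%nat) m Hd Hi1 (Hm l' Hl'L) _ Hb) as Bb.
      fold D. rewrite Rabs_mult, (Rabs_right (Rpower _ _)) by (left; apply Rpower_pos).
      pose proof (Rpower_pos d (/ (2 * INR (i l')))).
      unfold Rminus at 1. pose proof (Rabs_triang (Psi (i l') ((y0 i d l - y0 i d l') / D))
         (- Psi (i l') (- y0 i d l' / D))) as Htri. rewrite Rabs_Ropp in Htri.
      apply Rle_trans with (Rpower d (/ (2 * INR (i l'))) *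
         (Rabs (Psi (i l') ((y0 i d l - y0 i d l') / D)) + Rabs (Psi (i l') (- y0 i d l' / D)))).
      { apply Rmult_le_compat_l; lra. }
      lra.
    + exists C, 1. split; [lra|]. intros d Hd l Hl. apply (HC d l). split; auto.
Qed.
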